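(* Let $\mathcal{L}=(n,\mathcal{M},\mathcal{C})$ be a simple linearization and let $\mathcal{T}\subseteq\mathcal{P}$. If $D(\mathcal{L})$ has a subgraph $Z$ whose underlying undirected graph is a cycle, whose node set is contained in $\mathrm{succ}(\mathcal{T})$, and which satisfies $|U(Z)|=1$, then $\mathrm{proj}_{\mathcal{S}\cup\mathcal{T}}(P(\mathcal{L}))$ is not integral.
   Context: $[n]=\{1,\dots,n\}$; a monomial is a nonempty subset of $[n]$; $\mathcal{S}=\{\{i\}:i\in[n]\}$. A linearization is a triple $\mathcal{L}=(n,\mathcal{M},\mathcal{C})$, where $\mathcal{M}$ is a set of monomials with $\mathcal{S}\subseteq\mathcal{M}$ and $\mathcal{C}$ is a set of AND-constraints; each AND-constraint is a set $c\subseteq\mathcal{M}$ whose union $\bigcup c$ (resultant) lies in $\mathcal{M}$. $\mathcal{P}=\mathcal{M}\setminus\mathcal{S}$. Linearizations are consistent: each $m\in\mathcal{P}$ is the resultant of some $c$ with $|m'|<|m|$ for all $m'\in c$. $\mathcal{L}$ is simple if each proper monomial is the resultant of exactly one AND-constraint and $|\mathcal{C}|=|\mathcal{P}|$. $P(\mathcal{L})\subseteq\mathbb{R}^{\mathcal{M}}$ is the set of $y$ with $0\le y_m\le1$ ($m\in\mathcal{M}$), $y_{\bigcup c}\le y_m$ ($c\in\mathcal{C}$, $m\in c$), $\sum_{m\in c}y_m\le y_{\bigcup c}+|c|-1$ ($c\in\mathcal{C}$). $D(\mathcal{L})$ has node set $\mathcal{M}$ and, for each $c\in\mathcal{C}$,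 arcs from $\bigcup c$ to each $m\in c$. Cycles are simple. $\mathrm{succ}(W)$ is the set of nodes reachable by directed paths from $W$, including $W$. $U(Z)$ is the set of nodes of out-degree at least $2$ in $Z$. $\mathrm{proj}_{\mathcal{M}'}$ is orthogonal projection onto coordinates in $\mathcal{M}'$. *)

(* Defs.v *)
From HB Require Import structures.
From mathcomp Require Import all_boot all_order all_algebra.
From mathcomp Require Import reals.
Set Implicit Arguments. Unset Strict Implicit. Unset Printing Implicit Defensive.
Import Order.TTheory GRing.Theory Num.Theory.
Local Open Scope ring_scope.

(* Variables [n] are represented by 'I_n; a monomial is a set of variables. *)
Notation monomial n := {set 'I_n}.

Definition singletons (n : nat) : {set monomial n} := [set [set i] | i : 'I_n].

Definition resultant (n : nat) (c : {set monomial n}) : monomial n :=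
  \bigcup_(m in c) m.

Definition proper_monos (n : nat) (M : {set monomial n}) : {set monomial n} :=
  M :\: singletons n.

Definition linearization (n : nat) (M : {set monomial n})
  (C : {set {set monomial n}}) : Prop :=
  [/\ (forall m, m \in M -> m != set0),
      singletons n \subset M,
      (forall c, c \in C -> c \subset M /\ resultant c \in M) &
      (forall m, m \in proper_monos M ->
         exists2 c, c \in C &
           resultant c = m /\ (forall m', m' \in c -> (#|m'| < #|m|)%N))].

Definition simple_linearization (n : nat) (M : {set monomial n})
  (C : {set {set monomial n}}) : Prop :=
  [/\ linearization M C,
      (forall m, m \in proper_monos M ->
         #|[set c in C | resultant c == m]| = 1%N) &
      #|C| = #|proper_monos M|].

(* A vector of R^K, for K a set of monomials, is encoded as a function on all
   monomials that vanishes outside K. *)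
Definition supported_on (R : realType) (n : nat) (K : {set monomial n})
  (y : monomial n -> R) : Prop := forall m, m \notin K -> y m = 0.

Definition PL (R : realType) (n : nat) (M : {set monomial n})
  (C : {set {set monomial n}}) (y : monomial n -> R) : Prop :=
  [/\ supported_on M y,
      (forall m, m \in M -> 0 <= y m <= 1),
      (forall c m, c \in C -> m \in c -> y (resultant c) <= y m) &
      (forall c, c \in C ->
         \sum_(m in c) y m <= y (resultant c) + (#|c|%:R - 1))].

Definition proj (R : realType) (n : nat) (K : {set monomial n})
  (Q : (monomial n -> R) -> Prop) (z : monomial n -> R) : Prop :=
  exists2 y, Q y & forall m, z m = if m \in K then y m else 0.

Definition extreme_point (R : realType) (n : nat)
  (Q : (monomial n -> R) -> Prop) (x : monomial n -> R) : Prop :=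
  Q x /\ forall (y z : monomial n -> R) (t : R), Q y -> Q z -> 0 < t < 1 ->
    (forall m, x m = t * y m + (1 - t) * z m) -> forall m, y m = z m.

Definition integral_polytope (R : realType) (n : nat)
  (Q : (monomial n -> R) -> Prop) : Prop :=
  forall x, extreme_point Q x -> forall m, exists k : int, x m = k%:~R.

Definition arcD (n : nat) (C : {set {set monomial n}}) : rel (monomial n) :=
  fun a b => [exists c in C, (a == resultant c) && (b \in c)].

Definition succ (n : nat) (C : {set {set monomial n}}) (W : {set monomial n})
  : {set monomial n} := [set v | [exists w in W, connect (arcD C) w v]].

Definition cycle_subgraph (n : nat) (M : {set monomial n})
  (C : {set {set monomial n}}) (VZ : {set monomial n})
  (AZ : {set monomial n * monomial n}) : Prop :=
  [/\ VZ \subset M,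
      (forall a b, (a, b) \in AZ -> [/\ arcD C a b, a \in VZ & b \in VZ]),
      (forall a b, (a, b) \in AZ -> (b, a) \notin AZ) &
      exists s : seq (monomial n),
        [/\ uniq s, (3 <= size s)%N, VZ = [set x in s] &
            forall a b, a \in s -> b \in s ->
              (((a, b) \in AZ) || ((b, a) \in AZ)) =
              ((next s a == b) || (next s b == a))]].

Definition Uset (n : nat) (VZ : {set monomial n})
  (AZ : {set monomial n * monomial n}) : {set monomial n} :=
  [set v in VZ | (2 <= #|[set w | (v, w) \in AZ]|)%N].

(* Main.v *)
Require Import Defs.
From HB Require Import structures.
From mathcomp Require Import all_boot all_order all_algebra.
From mathcomp Require Import reals.
From mathcomp Require Import zify lra.
Require Import Defs.
Set Implicit Arguments. Unset Strict Implicit. Unset Printing Implicit Defensive.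
Import Order.TTheory GRing.Theory Num.Theory.

Lemma cyc_facts (T : eqType) (s : seq T) v : uniq s -> (3 <= size s)%N -> v \in s ->
  next s v != v /\ next s (next s v) != v.
Proof.
move=> Us Hs /rot_to [i s' Hr].
rewrite -!(next_rot i Us) Hr.
have : uniq (v :: s') by rewrite -Hr rot_uniq.
have : (3 <= size (v :: s'))%N by rewrite -Hr size_rot.
case: s' {Hr} => [|x1 [|x2 r]] //= _.
rewrite !inE !negb_or => /and3P [/and3P[vx1 vx2 vr] /andP[x1x2 x1r] _].
by rewrite eqxx !(eq_sym _ v) (negbTE vx1) eqxx.
Qed.

Lemma cardE_sum (V : finType) (A : {set V}) : #|A| = \sum_(v : V) (v \in A : nat).
Proof. by rewrite -sum1_card big_mkcond /=; apply: eq_bigr => v _; case: (v \in A). Qed.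

Lemma sum_eq1 (V : finType) (z : V) : \sum_(v : V) (v == z : nat) = 1%N.
Proof. by rewrite (bigD1 z) //= eqxx big1 // => v /negbTE ->. Qed.

Lemma cycle_common (V : finType) (VZ : {set V}) (AZ : {set V * V}) (f : V -> nat) :
  (forall a b, (a, b) \in AZ -> [/\ a \in VZ, b \in VZ & (f b < f a)%N]) ->
  (forall a b, (a, b) \in AZ -> (b, a) \notin AZ) ->
  (exists s : seq V,
        [/\ uniq s, (3 <= size s)%N, VZ = [set x in s] &
            forall a b, a \in s -> b \in s ->
              (((a, b) \in AZ) || ((b, a) \in AZ)) =
              ((next s a == b) || (next s b == a))]) ->
  #|[set v in VZ | (2 <= #|[set w | (v, w) \in AZ]|)%N]| = 1%N ->
  exists u a b z, [/\ (u, a) \in AZ, (u, b) \in AZ, a != b,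
     connect (fun x y => (x, y) \in AZ) a z & connect (fun x y => (x, y) \in AZ) b z].
Proof.
move=> Harc Hanti [s [Us Hs HVZ Hadj]] /eqP /cards1P [u HU].
pose O v := #|[set w | (v, w) \in AZ]|.
pose I v := #|[set w | (w, v) \in AZ]|.
have uV : u \in VZ /\ (2 <= O u)%N.
  have : u \in [set u] by rewrite inE.
  by rewrite -HU inE => /andP.
have notU v : v \in VZ -> v != u -> (O v <= 1)%N.
  move=> vV vu; have : v \notin [set u] by rewrite inE.
  by rewrite -HU inE vV /= -ltnNge ltnS.
have OI v : v \in VZ -> (O v + I v = 2)%N.
  move=> vV; have vs : v \in s by move: vV; rewrite HVZ inE.
  have [nv nnv] := cyc_facts Us Hs vs.
  have np : next s v != prev s v.
    apply: contra nnv => /eqP ->; by rewrite next_prev.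
  rewrite /O /I !cardE_sum -big_split /=.
  transitivity #|[set next s v; prev s v]|; last by rewrite cards2 np.
  rewrite cardE_sum.
  apply: eq_bigr => w _.
  case ws: (w \in s); last first.
    have h1 : (v, w) \notin AZ.
      by apply/negP => /Harc [_]; rewrite HVZ inE ws.
    have h2 : (w, v) \notin AZ.
      by apply/negP => /Harc [];  rewrite HVZ inE ws.
    rewrite !inE (negbTE h1) (negbTE h2).
    case: eqP => [E|_]; first by move: ws; rewrite E mem_next vs.
    case: eqP => [E|_] //; by move: ws; rewrite E mem_prev vs.
  have := Hadj v w vs ws.
  have E2 : (next s w == v) = (w == prev s v).
    apply/eqP/eqP => [<-|->]; [by rewrite prev_next | by rewrite next_prev].
  rewrite E2 !inE (eq_sym w) (eq_sym (prev s v)).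
  case a1: ((v, w) \in AZ); case a2: ((w, v) \in AZ) => //=.
  by move: (Hanti _ _ a1); rewrite a2.
  1-3: by rewrite (eq_sym w (next s v)) => <-.
have Oout v : v \notin VZ -> O v = 0%N.
  move=> vV; apply/eqP; rewrite cards_eq0; apply/eqP/setP => w; rewrite !inE.
  by apply/negP => /Harc [] /[!(negbTE vV)].
have Iout v : v \notin VZ -> I v = 0%N.
  move=> vV; apply/eqP; rewrite cards_eq0; apply/eqP/setP => w; rewrite !inE.
  by apply/negP => /Harc [] _ /[!(negbTE vV)].
have sumOI : (\sum_v O v = \sum_v I v)%N.
  rewrite /O /I (eq_bigr (fun v => \sum_w ((v,w) \in AZ : nat))); last first.
    by move=> v _; rewrite cardE_sum; apply: eq_bigr => w _; rewrite inE.
  rewrite [RHS](eq_bigr (fun v => \sum_w ((w,v) \in AZ : nat))); last first.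
    by move=> v _; rewrite cardE_sum; apply: eq_bigr => w _; rewrite inE.
  by rewrite exchange_big.
have sumtot : (\sum_v O v + \sum_v I v = 2 * #|VZ|)%N.
  rewrite -big_split /= cardE_sum big_distrr /=; apply: eq_bigr => v _.
  case vV: (v \in VZ); first by rewrite OI.
  by rewrite Oout ?Iout ?vV.
have uniq0 : forall z1 z2, z1 \in VZ -> z2 \in VZ -> O z1 = 0%N -> O z2 = 0%N -> z1 = z2.
  move=> z1 z2 z1V z2V O1 O2; apply/eqP; apply/negP => /negP z12.
  have bnd : forall v, (O v + (v == z1) + (v == z2) <= (v \in VZ) + (v == u))%N.
    move=> v; case vV: (v \in VZ); last first.
      rewrite Oout ?vV //; case: eqP => [E|_]; first by rewrite E z1V in vV.
      case: eqP => [E|_]; first by rewrite E z2V in vV.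
      by case: eqP => [E|_]; first by rewrite E uV.1 in vV.
    have := OI v vV.
    case: (v =P u) => [->|vu].
      case: (u =P z1) => [E|_]; first by move: uV.2; rewrite E O1.
      case: (u =P z2) => [E|_]; first by move: uV.2; rewrite E O2.
      move=> h; rewrite /=; lia.
    have := notU v vV (introN eqP vu).
    case: (v =P z1) => [->|_]; first by rewrite O1 (negbTE z12).
    case: (v =P z2) => [->|_]; first by rewrite O2.
    move=> h _ /=; lia.
  have : (\sum_v (O v + (v == z1) + (v == z2)) <= \sum_v ((v \in VZ) + (v == u)))%N by apply: leq_sum => v _; exact: bnd.
  rewrite !big_split /= !sum_eq1 -cardE_sum.
  move: sumOI sumtot; lia.
have reach : forall x, x \in VZ -> exists2 z, O z = 0%N & connect (fun x y => (x, y) \in AZ) x z /\ z \in VZ.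
  move=> x; elim: (f x).+1 {-2}x (ltnSn (f x)) => // k IH {}x fx xV.
  case Ox: (O x == 0%N); first by exists x; [apply/eqP | split; [exact: connect0 | exact: xV]].
  have : (0 < O x)%N by rewrite lt0n Ox.
  case/card_gt0P => y; rewrite inE => xy.
  have [_ yV fyx] := Harc _ _ xy.
  have [z Oz [cz zV]] := IH y (leq_trans fyx fx) yV.
  exists z => //; split => //; apply: connect_trans cz; exact: connect1.
have : (1 < O u)%N by case: uV.
case/card_gt1P => a [b [ua ub ab]]; rewrite !inE in ua ub.
have [_ aV _] := Harc _ _ ua; have [_ bV _] := Harc _ _ ub.
have [za Oa [ca zaV]] := reach a aV.
have [zb Ob [cb zbV]] := reach b bV.
exists u, a, b, za; split => //.
by rewrite (uniq0 za zb).
Qed.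

Definition cm (n : nat) (C : {set {set monomial n}}) (m : monomial n) : {set monomial n} :=
  odflt set0 [pick c in C | resultant c == m].

Lemma not_proper (n : nat) (M : {set monomial n}) m :
  m \in M -> m \notin proper_monos M -> exists i, m = [set i].
Proof.
move=> mM; rewrite /proper_monos inE mM andbT negbK => /imsetP [i _ ->].
by exists i.
Qed.

Lemma cm_spec (n : nat) (M : {set monomial n}) C :
  simple_linearization M C -> forall m, m \in proper_monos M ->
  [/\ cm C m \in C, resultant (cm C m) = m,
      (forall m', m' \in cm C m -> m' \in M /\ (#|m'| < #|m|)%N) &
      forall c, c \in C -> resultant c = m -> c = cm C m].
Proof.
move=> [[Hne HS Hc Hcons] Huniq _] m mP.
have /eqP/cards1P [c0 E] := Huniq m mP.
have U c : c \in C -> resultant c = m -> c = c0.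
  move=> cC rc; apply/set1P; rewrite -E inE cC rc eqxx //.
have Ecm : cm C m = c0.
  rewrite /cm; case: pickP => [c /andP [cC /eqP rc]|none] /=; first exact: U.
  have : c0 \in [set c in C | resultant c == m] by rewrite E inE.
  by rewrite inE none.
have [c cC [rc small]] := Hcons m mP.
have cc0 := U c cC rc.
rewrite Ecm -cc0; split => //.
- move=> m' m'c; split; last exact: small.
  have [sub _] := Hc c cC; exact: (subsetP sub).
- by move=> c' c'C rc'; rewrite cc0; exact: U.
Qed.

Fixpoint dd (n : nat) (M : {set monomial n}) (C : {set {set monomial n}}) (j : 'I_n)
   (k : nat) (m : monomial n) : nat :=
  if k is k'.+1 then
    (if m \in proper_monos M then \sum_(m' in cm C m) dd M C j k' m' else (m == [set j]))
  else (m == [set j]).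

Lemma dd_stable (n : nat) (M : {set monomial n}) C j :
  simple_linearization M C -> forall k k' m, m \in M -> (#|m| <= k)%N -> (#|m| <= k')%N ->
  dd M C j k m = dd M C j k' m.
Proof.
move=> HL; have [[Hne _ _ _] _ _] := HL.
elim=> [|k IH] k' m mM hk hk'.
  by move: (Hne m mM); rewrite -card_gt0 => /leq_trans /(_ hk).
case: k' hk' => [|k'] hk'.
  by move: (Hne m mM); rewrite -card_gt0 => /leq_trans /(_ hk').
rewrite /=; case mP: (m \in proper_monos M) => //.
have [_ _ sm _] := cm_spec HL mP.
apply: eq_bigr => m' m'c; have [m'M lt] := sm m' m'c.
apply: IH => //; rewrite -ltnS; exact: leq_trans lt _.
Qed.

Definition dm (n : nat) (M : {set monomial n}) C j m := dd M C j n m.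

Lemma card_le_n (n : nat) (m : monomial n) : (#|m| <= n)%N.
Proof. by rewrite -[X in (_ <= X)%N](card_ord n) max_card. Qed.

Lemma dm_sing (n : nat) (M : {set monomial n}) C j m :
  m \notin proper_monos M -> dm M C j m = (m == [set j]).
Proof.
move=> /negbTE mP; rewrite /dm.
have h : forall k, dd M C j k m = (m == [set j]) by case => //= k; rewrite mP.
exact: h.
Qed.

Lemma dm_prop (n : nat) (M : {set monomial n}) C j m :
  simple_linearization M C -> m \in proper_monos M ->
  dm M C j m = (\sum_(m' in cm C m) dm M C j m')%N.
Proof.
move=> HL mP; have [_ _ sm _] := cm_spec HL mP.
have mM : m \in M by move: mP; rewrite inE => /andP[].
have [[Hne _ _ _] _ _] := HL.
rewrite /dm.
have h : forall k, (#|m| <= k)%N -> dd M C j k m = (\sum_(m' in cm C m) dd M C j n m')%N.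
  case=> [|k] hk; first by move: (Hne m mM); rewrite -card_gt0; lia.
  rewrite /= mP; apply: eq_bigr => m' m'c.
  have [m'M lt] := sm m' m'c.
  apply: (@dd_stable _ M C j HL) => //; last exact: card_le_n.
  rewrite -ltnS; exact: leq_trans lt hk.
exact: h (card_le_n m).
Qed.

Lemma sing_res (n : nat) (M : {set monomial n}) C c :
  linearization M C -> c \in C -> resultant c \notin proper_monos M ->
  resultant c \in c /\ forall m, m \in c -> m = resultant c.
Proof.
move=> [Hne HS Hc _] cC rP.
have [sub rM] := Hc c cC.
have [i Ei] := not_proper rM rP.
have all1 : forall m, m \in c -> m = resultant c.
  move=> m mc; have : m \subset resultant c by exact: bigcup_sup.
  rewrite Ei subset1 => /orP [/eqP //|/eqP m0].
  by move: (Hne m (subsetP sub m mc)); rewrite m0 eqxx.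
split => //.
case: (set_0Vmem c) => [c0|[m mc]]; last by rewrite -(all1 m mc).
by move: (Hne _ rM); rewrite /resultant c0 big_set0 eqxx.
Qed.

Lemma d_arc (n : nat) (M : {set monomial n}) C j c m :
  simple_linearization M C -> c \in C -> m \in c ->
  (dm M C j m <= dm M C j (resultant c))%N.
Proof.
move=> HL cC mc; have [HL0 _ _] := HL.
case rP: (resultant c \in proper_monos M); last first.
  by have [_ E] := sing_res HL0 cC (negbT rP); rewrite -(E m mc).
have [_ _ _ U] := cm_spec HL rP.
rewrite (dm_prop j HL rP) -(U c cC erefl) (bigD1 m) //=; exact: leq_addr.
Qed.

Lemma d_con (n : nat) (M : {set monomial n}) C j c :
  simple_linearization M C -> c \in C ->
  (dm M C j (resultant c) <= \sum_(m in c) dm M C j m)%N.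
Proof.
move=> HL cC; have [HL0 _ _] := HL.
case rP: (resultant c \in proper_monos M); last first.
  have [rc _] := sing_res HL0 cC (negbT rP).
  rewrite (bigD1 (resultant c)) //=; exact: leq_addr.
have [_ _ _ U] := cm_spec HL rP.
by rewrite (dm_prop j HL rP) -(U c cC erefl).
Qed.

Lemma d_pos (n : nat) (M : {set monomial n}) C j m :
  simple_linearization M C -> m \in M -> j \in m -> (1 <= dm M C j m)%N.
Proof.
move=> HL; elim: #|m|.+1 {-2}m (ltnSn #|m|) => // k IH {}m hk mM jm.
case mP: (m \in proper_monos M); last first.
  have [i Ei] := not_proper mM (negbT mP).
  rewrite dm_sing ?mP // Ei; move: jm; rewrite Ei inE => /eqP ->; by rewrite eqxx.
have [_ rc sm _] := cm_spec HL mP.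
move: jm; rewrite -{1}rc => /bigcupP [m' m'c jm'].
have [m'M lt] := sm m' m'c.
rewrite (dm_prop j HL mP) (bigD1 m') //=.
apply: leq_trans (leq_addr _ _).
apply: IH => //; exact: leq_trans lt hk.
Qed.

Local Open Scope ring_scope.

Lemma lower (R : realType) (n : nat) (M : {set monomial n}) C j (Y : monomial n -> R) :
  simple_linearization M C -> PL M C Y -> (forall i, i != j -> Y [set i] = 1) ->
  forall m, m \in M -> 1 - (dm M C j m)%:R * (1 - Y [set j]) <= Y m.
Proof.
move=> HL [_ Hb Hmono Hsum] H1 m.
elim: #|m|.+1 {-2}m (ltnSn #|m|) => // k IH {}m hk mM.
case mP: (m \in proper_monos M); last first.
  have [i Ei] := not_proper mM (negbT mP).
  rewrite dm_sing ?mP // Ei; case: (i =P j) => [->|ij].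
    by rewrite eqxx /= mul1r; lra.
  have -> : ([set i] == [set j]) = false.
    by apply/negP => /eqP /set1_inj /ij.
  by rewrite /= mul0r subr0 H1 //; apply/eqP.
have [cC rc sm _] := cm_spec HL mP.
have := Hsum _ cC; rewrite rc.
have : \sum_(m' in cm C m) (1 - (dm M C j m')%:R * (1 - Y [set j])) <= \sum_(m' in cm C m) Y m'.
  apply: ler_sum => m' m'c; have [m'M lt] := sm m' m'c.
  apply: IH => //; exact: leq_trans lt hk.
rewrite sumrB sumr_const -mulr_suml -natr_sum -(dm_prop j HL mP).
move=> h1 h2.
lra.
Qed.

Definition hh (R : realType) (r : R) : R := Num.max 0 (1 - r).

Lemma hh_ge0 (R : realType) (r : R) : 0 <= hh r.
Proof. by rewrite /hh maxEle; case: (leP 0 (1 - r)) => ?; lra. Qed.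
Lemma hh_le1 (R : realType) (r : R) : 0 <= r -> hh r <= 1.
Proof. by rewrite /hh maxEle; case: (leP 0 (1 - r)) => ?; lra. Qed.
Lemma hh_ge (R : realType) (r : R) : 1 - r <= hh r.
Proof. by rewrite /hh maxEle; case: (leP 0 (1 - r)) => ?; lra. Qed.
Lemma hh_anti (R : realType) (r r' : R) : r <= r' -> hh r' <= hh r.
Proof. by rewrite /hh !maxEle; case: (leP 0 (1 - r)); case: (leP 0 (1 - r')) => ? ?; lra. Qed.
Lemma hh_add (R : realType) (a b : R) : 0 <= a -> 0 <= b -> hh a + hh b <= hh (a + b) + 1.
Proof. by rewrite /hh !maxEle; case: (leP 0 (1 - a)); case: (leP 0 (1 - b)); case: (leP 0 (1 - (a + b))) => ? ? ?; lra. Qed.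
Lemma hh_small (R : realType) (r : R) : r <= 1 -> hh r = 1 - r.
Proof. by rewrite /hh maxEle; case: (leP 0 (1 - r)) => ?; lra. Qed.
Lemma hh_big (R : realType) (r : R) : 1 <= r -> hh r = 0.
Proof. by rewrite /hh maxEle; case: (leP 0 (1 - r)) => ?; lra. Qed.

Lemma hh_sum (R : realType) (X : Type) (s : seq X) (F : X -> R) :
  (forall x, 0 <= F x) ->
  \sum_(x <- s) hh (F x) <= hh (\sum_(x <- s) F x) + (size s)%:R - 1.
Proof.
move=> F0; elim: s => [|x s IH].
  by rewrite !big_nil /= hh_small; lra.
rewrite !big_cons /=.
have S0 : 0 <= \sum_(y <- s) F y by apply: sumr_ge0 => y _.
have := hh_add (F0 x) S0.
rewrite -[(size s).+1]addn1 natrD; lra.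
Qed.

Definition xpt (R : realType) (n : nat) (M : {set monomial n}) C j (D : nat) (m : monomial n) : R :=
  if m \in M then hh ((dm M C j m)%:R / D%:R) else 0.

Lemma xpt_PL (R : realType) (n : nat) (M : {set monomial n}) C j (D : nat) :
  simple_linearization M C -> PL M C (@xpt R n M C j D).
Proof.
move=> HL; have [[Hne HS Hc _] _ _] := HL.
have arg0 : forall k : nat, 0 <= (k%:R / D%:R : R) by move=> k; apply: divr_ge0.
split.
- by move=> m /negbTE mM; rewrite /xpt mM.
- by move=> m mM; rewrite /xpt mM hh_ge0 hh_le1.
- move=> c m cC mc; have [sub rM] := Hc c cC; have mM := subsetP sub m mc.
  rewrite /xpt rM mM; apply: hh_anti; apply: ler_wpM2r; first by rewrite invr_ge0.
  by rewrite ler_nat; exact: d_arc.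
- move=> c cC; have [sub rM] := Hc c cC.
  rewrite (eq_bigr (fun m => hh ((dm M C j m)%:R / D%:R))); last first.
    by move=> m mc; rewrite /xpt (subsetP sub m mc).
  rewrite /xpt rM -big_enum /= cardE.
  rewrite addrA; apply: le_trans (@hh_sum R _ (enum c) (fun i => ((dm M C j i)%:R / D%:R : R)) (fun i => arg0 _)) _.
  rewrite -mulr_suml -natr_sum big_enum /=.
  have : hh ((\sum_(i in c) dm M C j i)%:R / D%:R) <= hh ((dm M C j (resultant c))%:R / D%:R :R).
    apply: hh_anti; apply: ler_wpM2r; first by rewrite invr_ge0.
    by rewrite ler_nat; exact: d_con.
  lra.
Qed.

Lemma avg_lo (R : realType) (a b v t : R) : v <= a -> v <= b -> 0 < t < 1 ->
  v = t * a + (1 - t) * b -> a = v /\ b = v.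
Proof.
move=> ha hb /andP[t0 t1] e.
have h1 : 0 <= t * (a - v) by apply: mulr_ge0; lra.
have h2 : 0 <= (1 - t) * (b - v) by apply: mulr_ge0; lra.
have e1 : t * (a - v) = 0 by nra.
have e2 : (1 - t) * (b - v) = 0 by nra.
move: e1 e2 => /eqP; rewrite mulf_eq0 => /orP [/eqP|/eqP]; first lra.
move=> ?; move/eqP; rewrite mulf_eq0 => /orP [/eqP|/eqP]; lra.
Qed.

Lemma avg_hi (R : realType) (a b v t : R) : a <= v -> b <= v -> 0 < t < 1 ->
  v = t * a + (1 - t) * b -> a = v /\ b = v.
Proof.
move=> ha hb ht e.
have [h1 h2] := @avg_lo R (- a) (- b) (- v) t ltac:(lra) ltac:(lra) ht ltac:(lra).
lra.
Qed.

Lemma arc_facts (n : nat) (M : {set monomial n}) C a b :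
  linearization M C -> arcD C a b -> [/\ a \in M, b \in M & b \subset a].
Proof.
move=> [Hne HS Hc _] /existsP [c /andP [cC /andP [/eqP -> bc]]].
have [sub rM] := Hc c cC; split => //; first exact: subsetP sub b bc.
by rewrite /resultant; apply: (bigcup_sup b bc).
Qed.

Lemma conn_d (n : nat) (M : {set monomial n}) C j x y :
  simple_linearization M C -> connect (arcD C) x y -> (dm M C j y <= dm M C j x)%N.
Proof.
move=> HL /connectP [p pth ->]; elim: p x pth => [|z p IH] x //= /andP [exz pz].
apply: leq_trans (IH z pz) _.
move: exz => /existsP [c /andP [cC /andP [/eqP -> zc]]]; exact: d_arc.
Qed.

Theorem lemma3p13 (R : realType) (n : nat) (M : {set {set 'I_n}})
  (C : {set {set {set 'I_n}}}) (T : {set {set 'I_n}})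
  (VZ : {set {set 'I_n}}) (AZ : {set {set 'I_n} * {set 'I_n}}) :
  simple_linearization M C ->
  T \subset proper_monos M ->
  cycle_subgraph M C VZ AZ ->
  VZ \subset succ C T ->
  #|Uset VZ AZ| = 1%N ->
  ~ integral_polytope (proj (singletons n :|: T) (@PL R n M C)).
Proof.
move=> HL TP [VZM Harc Hanti Hs] VZsub HU.
have [HL0 _ _] := HL; have [Hne HS Hc Hcons] := HL0.
have noloop : forall a, (a, a) \notin AZ.
  move=> a; apply/negP => aa; have [_ aV _] := Harc _ _ aa.
  have [s [Us S3 HVZ Hadj]] := Hs.
  have as_ : a \in s by move: aV; rewrite HVZ inE.
  have := Hadj a a as_ as_; rewrite aa orbb /= => /esym /eqP.
  by have [/negbTE -> _] := cyc_facts Us S3 as_.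
have Harc' : forall a b, (a, b) \in AZ -> [/\ a \in VZ, b \in VZ & (#|b| < #|a|)%N].
  move=> a b ab; have [abD aV bV] := Harc _ _ ab; split => //.
  have [_ _ sub] := arc_facts HL0 abD; apply: proper_card; rewrite properEneq sub andbT.
  apply/eqP => ba; move: ab; rewrite ba; apply/negP; exact: noloop.
have [u [a [b [z [ua ub ab az bz]]]]] := cycle_common Harc' Hanti Hs HU.
have conn_sub : forall x y, connect (fun x y => (x, y) \in AZ) x y -> x \in M -> y \in M /\ y \subset x.
  move=> x y /connectP [p pth ->]; elim: p x pth => [|w p IH] x /=; first by move=> _ ->.
  move=> /andP [xw pw] xM; have [xwD _ _] := Harc _ _ xw.
  have [_ wM wx] := arc_facts HL0 xwD.
  have [h1 h2] := IH w pw wM; split => //; exact: subset_trans h2 wx.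
have [uaD uV aV] := Harc _ _ ua; have [ubD _ bV] := Harc _ _ ub.
have aM := subsetP VZM a aV; have bM := subsetP VZM b bV; have uM := subsetP VZM u uV.
have [zM za] := conn_sub _ _ az aM; have [_ zb] := conn_sub _ _ bz bM.
have [j jz] : exists j, j \in z by apply/set0Pn; exact: Hne.
have ja : j \in a := subsetP za j jz; have jb : j \in b := subsetP zb j jz.
have := subsetP VZsub u uV; rewrite inE => /existsP [t0 /andP [t0T t0u]].
have t0P := subsetP TP t0 t0T.
have t0M : t0 \in M by move: t0P; rewrite inE => /andP [].
have uP : u \in proper_monos M.
  apply/negP => /negP uP.
  move: uaD => /existsP [c /andP [cC /andP [/eqP Eu ac]]].
  rewrite Eu in uP; have [_ E] := sing_res HL0 cC uP.
  have aeu : a = u by rewrite Eu; exact: E a ac.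
  by move: ua; rewrite aeu; apply/negP; exact: noloop.
have [cuC rcu smu Uu] := cm_spec HL uP.
have acu : a \in cm C u.
  move: uaD => /existsP [c /andP [cC /andP [/eqP Eu ac]]]; by rewrite -(Uu c cC (esym Eu)).
have bcu : b \in cm C u.
  move: ubD => /existsP [c /andP [cC /andP [/eqP Eu bc]]]; by rewrite -(Uu c cC (esym Eu)).
pose D := dm M C j t0.
have D2 : (2 <= D)%N.
  have h1 : (dm M C j a + dm M C j b <= dm M C j u)%N.
    rewrite (dm_prop j HL uP) (bigD1 a) //= leq_add2l (bigD1 b) /=; last by rewrite bcu eq_sym ab.
    exact: leq_addr.
  have h2 := d_pos HL aM ja; have h3 := d_pos HL bM jb.
  have h4 := conn_d j HL t0u.
  rewrite /D; clear -h1 h2 h3 h4; move: h1 h2 h3 h4; set x1 := dm M C j a; set x2 := dm M C j b; set x3 := dm M C j u; set x4 := dm M C j t0; lia.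
have D0 : (0 < D)%N by apply: leq_trans D2.
pose K := singletons n :|: T.
pose x := @xpt R n M C j D.
pose zp := fun m => if m \in K then x m else 0.
have jS : [set j] \in singletons n by apply: imset_f.
have jK : [set j] \in K by rewrite inE jS.
have jM : [set j] \in M := subsetP HS _ jS.
have jnP : [set j] \notin proper_monos M by rewrite inE jS.
have dj : dm M C j [set j] = 1%N by rewrite dm_sing // eqxx.
have DR : 0 < (D%:R : R) by rewrite ltr0n.
have DR2 : 2%:R <= (D%:R : R) by rewrite ler_nat.
have Dinv0 : 0 < (D%:R : R)^-1 by rewrite invr_gt0.
have Dinv1 : (D%:R : R)^-1 < 1 by rewrite invf_lt1 //; lra.
have xj : x [set j] = 1 - (D%:R)^-1.
  by rewrite /x /xpt jM dj mul1r hh_small //; apply: ltW.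
have Hext : extreme_point (proj K (@PL R n M C)) zp.
  split; first by exists x => //; exact: xpt_PL.
  move=> Y' Z' t [Y PY HY] [Z PZ HZ] ht Hav m.
  rewrite HY HZ; case mK: (m \in K) => //.
  have KM : forall m, m \in K -> m \in M.
    move=> m0; rewrite inE => /orP [/(subsetP HS) //|/(subsetP TP)].
    by rewrite inE => /andP [].
  have Hav' : forall m, m \in K -> x m = t * Y m + (1 - t) * Z m.
    by move=> m0 m0K; have := Hav m0; rewrite /zp HY HZ m0K.
  have [_ bY _ _] := PY; have [_ bZ _ _] := PZ.
  have s1 : forall i, i != j -> Y [set i] = 1 /\ Z [set i] = 1.
    move=> i ij; have iS : [set i] \in singletons n by apply: imset_f.
    have iK : [set i] \in K by rewrite inE iS.
    have iM := KM _ iK.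
    have xi : x [set i] = 1.
      rewrite /x /xpt iM dm_sing; last by rewrite inE iS.
      have -> : ([set i] == [set j]) = false by apply/negP => /eqP /set1_inj /eqP; apply/negP.
      by rewrite mul0r hh_small //; lra.
    have := bY _ iM; have := bZ _ iM => /andP [_ z1] /andP [_ y1].
    have [h1 h2] := avg_hi y1 z1 ht (etrans (esym xi) (Hav' _ iK)).
    split; [exact: h1 | exact: h2].
  have H1Y : forall i, i != j -> Y [set i] = 1 by move=> i /s1 [].
  have H1Z : forall i, i != j -> Z [set i] = 1 by move=> i /s1 [].
  have t0K : t0 \in K by rewrite inE t0T orbT.
  have xt0 : x t0 = 0.
    by rewrite /x /xpt t0M -/D mulfV ?hh_big //; apply: lt0r_neq0.
  have [Yt0 Zt0] : Y t0 = 0 /\ Z t0 = 0.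
    have := bY _ t0M; have := bZ _ t0M => /andP [z0 _] /andP [y0 _].
    exact: avg_lo y0 z0 ht (etrans (esym xt0) (Hav' _ t0K)).
  have upj : forall W : {set 'I_n} -> R, PL M C W -> (forall i, i != j -> W [set i] = 1) -> W t0 = 0 ->
      W [set j] <= 1 - (D%:R)^-1.
    move=> W PW H1 W0; have := lower HL PW H1 t0M; rewrite -/D W0 => h.
    have h' : (D%:R)^-1 * 1 <= (D%:R)^-1 * ((D%:R : R) * (1 - W [set j])).
      by apply: ler_wpM2l; [exact: ltW | lra].
    move: h'; rewrite mulKf ?mulr1; last by apply: lt0r_neq0.
    lra.
  have [Yj Zj] : Y [set j] = 1 - (D%:R)^-1 /\ Z [set j] = 1 - (D%:R)^-1.
    have := avg_hi (upj _ PY H1Y Yt0) (upj _ PZ H1Z Zt0) ht.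
    by rewrite -xj => /(_ (Hav' _ jK)).
  have lo : forall W : {set 'I_n} -> R, PL M C W -> (forall i, i != j -> W [set i] = 1) ->
      W [set j] = 1 - (D%:R)^-1 -> x m <= W m.
    move=> W PW H1 Wj; have mM := KM _ mK.
    have := lower HL PW H1 mM; rewrite Wj.
    have [_ bW _ _] := PW; have := bW _ mM => /andP [w0 _].
    rewrite /x /xpt mM /hh ge_max w0 /= => h.
    have e : (1 - (1 - (D%:R)^-1)) = (D%:R : R)^-1 by lra.
    by rewrite e in h.
  have [h1 h2] := avg_lo (lo _ PY H1Y Yj) (lo _ PZ H1Z Zj) ht (Hav' _ mK).
  by rewrite h1 h2.
move=> Hint; have [k Hk] := Hint zp Hext [set j].
move: Hk; rewrite /zp jK xj => Hk.
have k0 : (0 < k)%R by rewrite -(ltr0z R) -Hk; lra.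
have k1 : (k < 1)%R by rewrite -(ltrz1 R) -Hk; lra.
by move: k0 k1; case: k {Hk} => [[|p]|p].
Qed.
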